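(* Let $R$ be a ring with identity and involution $*$, and let $a,b\in R$ with $aR=a^2R$. Then the following are equivalent: (1) $a$ is core invertible with core inverse $a^{\oplus}=b$; (2) $bab=b$, $(ab)^*=ab$ and $ba^2=a$.
   Context: An involution on $R$ satisfies $(a^* )^*=a$, $(ab)^*=b^*a^*$, $(a+b)^*=a^*+b^*$. An element $x\in R$ is a core inverse of $a$ if $axa=a$, $xR=aR$ and $Rx=Ra^*$; it is unique when it exists and is denoted $a^{\oplus}$. $aR=\{ar: r\in R\}$. *)

(* Defs.v *)
From mathcomp Require Import all_boot all_algebra.
Set Implicit Arguments. Unset Strict Implicit. Unset Printing Implicit Defensive.
Import GRing.Theory.
Local Open Scope ring_scope.

Definition involution (R : pzRingType) (star : R -> R) : Prop :=
  (forall a, star (star a) = a) /\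
  (forall a b, star (a * b) = star b * star a) /\
  (forall a b, star (a + b) = star a + star b).

Definition rideal (R : pzRingType) (a : R) : R -> Prop := fun x => exists r, x = a * r.
Definition lideal (R : pzRingType) (a : R) : R -> Prop := fun x => exists r, x = r * a.

Definition rideal_eq (R : pzRingType) (a b : R) : Prop :=
  forall x, rideal a x <-> rideal b x.
Definition lideal_eq (R : pzRingType) (a b : R) : Prop :=
  forall x, lideal a x <-> lideal b x.

Definition is_core_inverse (R : pzRingType) (star : R -> R) (a x : R) : Prop :=
  a * x * a = a /\ rideal_eq x a /\ lideal_eq x (star a).

(* Main.v *)
Require Import Defs.
From mathcomp Require Import all_boot all_algebra.
Import GRing.Theory.
Local Open Scope ring_scope.

Theorem theorem3p5 (R : pzRingType) (star : R -> R) (a b : R) :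
  involution star ->
  rideal_eq a (a ^+ 2) ->
  (is_core_inverse star a b <->
   [/\ b * a * b = b, star (a * b) = a * b & b * a ^+ 2 = a]).
Proof.
move=> [sK [sM sD]] Ha2.
have [r Hr] : exists r, a = a ^+ 2 * r by apply/(Ha2 a); exists 1; rewrite mulr1.
rewrite expr2 in Hr.
split.
- move=> [aba [Hb Hl]].
  have [t Ht] : exists t, b = t * star a by apply/(Hl b); exists 1; rewrite mul1r.
  have [s Hs] : exists s, a = b * s by apply/(Hb a); exists 1; rewrite mulr1.
  have sa : star a = star a * star b * star a by rewrite -sM -sM mulrA aba.
  have bb : b = b * star (a * b).
    by rewrite sM mulrA {1}Ht {1}sa !mulrA -Ht.
  have hab : star (a * b) = a * b.
    have e : a * b = a * b * star (a * b) by rewrite -mulrA -bb.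
    by rewrite {1}e sM sK -e.
  have bab : b * a * b = b by rewrite -mulrA -hab -bb.
  split=> //.
  by rewrite expr2 mulrA {2}Hs mulrA bab -Hs.
- move=> [bab hab ba2].
  rewrite expr2 mulrA in ba2.
  have aba : a * b * a = a by rewrite {2}Hr !mulrA -(mulrA a b) -(mulrA a (b * a)) ba2 -Hr.
  have ba : b * a = a * r by rewrite {1}Hr !mulrA ba2.
  split=> //; split=> x; split.
  + by move=> [y ->]; exists (r * b * y); rewrite -{1}bab ba !mulrA.
  + by move=> [y ->]; exists (a * a * y); rewrite -{1}ba2 !mulrA.
  + by move=> [y ->]; exists (y * b * star b); rewrite -{1}bab -(mulrA b a b) -hab sM !mulrA.
  + move=> [y ->]; exists (y * star a * a).
    by rewrite -{1}aba sM hab !mulrA.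
Qed.
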